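(* Let $R$ be a commutative ring. An ideal $I$ of $R$ is 2-absorbing if and only if it is strongly 2-absorbing.
   Context: All rings are commutative with identity $1\neq 0$. An ideal $I$ of $R$ is 2-absorbing if whenever $a,b,c\in R$ and $abc\in I$, then $ab\in I$ or $ac\in I$ or $bc\in I$. An ideal $I$ of $R$ is strongly 2-absorbing if whenever $I_1,I_2,I_3$ are ideals of $R$ with $I_1I_2I_3\subseteq I$, then $I_1I_2\subseteq I$ or $I_1I_3\subseteq I$ or $I_2I_3\subseteq I$. *)

(* Defs.v *)
From mathcomp Require Import all_boot all_order all_algebra.
Set Implicit Arguments. Unset Strict Implicit. Unset Printing Implicit Defensive.
Import GRing.Theory.
Local Open Scope ring_scope.

Definition is_ideal (R : comNzRingType) (I : R -> Prop) : Prop :=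
  [/\ I 0, (forall x y, I x -> I y -> I (x + y)) & (forall r x, I x -> I (r * x))].

Definition ideal_sub (R : comNzRingType) (I J : R -> Prop) : Prop :=
  forall x, I x -> J x.

Definition ideal_mul (R : comNzRingType) (I J : R -> Prop) : R -> Prop :=
  fun z => exists (n : nat) (a b : 'I_n -> R),
    [/\ forall i, I (a i), forall i, J (b i) & z = \sum_(i < n) a i * b i].

Definition two_absorbing (R : comNzRingType) (I : R -> Prop) : Prop :=
  forall a b c : R, I (a * b * c) -> I (a * b) \/ I (a * c) \/ I (b * c).

Definition strongly_two_absorbing (R : comNzRingType) (I : R -> Prop) : Prop :=
  forall I1 I2 I3 : R -> Prop, is_ideal I1 -> is_ideal I2 -> is_ideal I3 ->
    ideal_sub (ideal_mul (ideal_mul I1 I2) I3) I ->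
    ideal_sub (ideal_mul I1 I2) I \/ ideal_sub (ideal_mul I1 I3) I \/
    ideal_sub (ideal_mul I2 I3) I.

(* Main.v *)
Require Import Defs.
From mathcomp Require Import all_boot all_order all_algebra.
From Stdlib Require Import Classical.
From mathcomp Require Import ring.
Set Implicit Arguments. Unset Strict Implicit. Unset Printing Implicit Defensive.
Import GRing.Theory.

Section Aux.
Local Open Scope ring_scope.
Variable R : comNzRingType.

Lemma mul_mem (J K : R -> Prop) x y : J x -> K y -> ideal_mul J K (x * y).
Proof.
move=> Jx Ky; exists 1%N, (fun _ => x), (fun _ => y); split => //.
by rewrite big_ord1.
Qed.

Lemma sub_of_prod (I J K : R -> Prop) : is_ideal I ->
  (forall x y, J x -> K y -> I (x * y)) -> ideal_sub (ideal_mul J K) I.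
Proof.
move=> [I0 ID IM] H z [n [a [b [Ja Kb ->]]]].
apply: (big_ind I) => //; move=> i _; exact: H.
Qed.

Lemma ideal_sub_cancel (I : R -> Prop) x y : is_ideal I -> I (x + y) -> I y -> I x.
Proof.
move=> [I0 ID IM] Hxy Hy.
have -> : x = (x + y) + (-1) * y by rewrite mulN1r addrK.
by apply: ID => //; apply: IM.
Qed.

Definition addcl (J : R -> Prop) := forall x y, J x -> J y -> J (x + y).

Lemma L1 (I J : R -> Prop) a b : is_ideal I -> two_absorbing I -> addcl J ->
  (forall j, J j -> I (a * b * j)) ->
  I (a * b) \/ (forall j, J j -> I (a * j)) \/ (forall j, J j -> I (b * j)).
Proof.
move=> HI H2 HJ H.
case: (classic (I (a * b))) => [|nab]; first by left.
case: (classic (forall j, J j -> I (a * j))) => [|na]; first by right; left.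
right; right.
apply: NNPP => nb.
have [j1 Hj1] := not_all_ex_not _ _ na.
have [j2 Hj2] := not_all_ex_not _ _ nb.
have [J1 aj1] := imply_to_and _ _ Hj1.
have [J2 bj2] := imply_to_and _ _ Hj2.
have bj1 : I (b * j1).
  by case: (H2 _ _ _ (H _ J1)) => [//|[//|//]].
have aj2 : I (a * j2).
  by case: (H2 _ _ _ (H _ J2)) => [//|[//|//]].
case: (H2 _ _ _ (H _ (HJ _ _ J1 J2))) => [//|[h|h]].
- apply: aj1; apply: (ideal_sub_cancel HI _ aj2); by rewrite -mulrDr.
- apply: bj2; apply: (ideal_sub_cancel HI _ bj1); by rewrite addrC -mulrDr.
Qed.

Lemma L2 (I J K : R -> Prop) a : is_ideal I -> two_absorbing I -> addcl J -> addcl K ->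
  (forall j k, J j -> K k -> I (a * j * k)) ->
  (forall j, J j -> I (a * j)) \/ (forall k, K k -> I (a * k)) \/
  (forall j k, J j -> K k -> I (j * k)).
Proof.
move=> HI H2 HJ HK H.
case: (classic (forall j, J j -> I (a * j))) => [|na]; first by left.
case: (classic (forall k, K k -> I (a * k))) => [|nk]; first by right; left.
right; right.
have [j1 Hj1] := not_all_ex_not _ _ na.
have [k1 Hk1] := not_all_ex_not _ _ nk.
have [J1 aj1] := imply_to_and _ _ Hj1.
have [K1 ak1] := imply_to_and _ _ Hk1.
have LJ : forall j, J j -> I (a * j) \/ (forall k, K k -> I (j * k)).
  move=> j Jj; case: (L1 HI H2 HK (a := a) (b := j) (fun k Kk => H _ _ Jj Kk)) => [h|[h|h]].
  - by left. - by exfalso; apply: nk. - by right.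
have LK : forall k, K k -> I (a * k) \/ (forall j, J j -> I (j * k)).
  move=> k Kk.
  have H' : forall j, J j -> I (a * k * j).
    by move=> j Jj; rewrite -mulrA (mulrC k) mulrA; apply: H.
  case: (L1 HI H2 HJ H') => [h|[h|h]].
  - by left. - by exfalso; apply: na. - by right => j Jj; rewrite mulrC; apply: h.
move=> j k Jj Kk.
case: (LJ j Jj) => [aj|h]; last by apply: h.
case: (LK k Kk) => [ak|h]; last by apply: h.
case: (LJ _ (HJ _ _ Jj J1)) => [h|h].
  by exfalso; apply: aj1; apply: (ideal_sub_cancel HI _ aj); rewrite addrC -mulrDr.
case: (LJ _ J1) => [//|h1].
apply: (ideal_sub_cancel HI _ (h1 _ Kk)); rewrite -mulrDl; exact: h.
Qed.

End Aux.

Local Open Scope ring_scope.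
Theorem theorem2p13 (R : comNzRingType) (I : R -> Prop) :
  is_ideal I -> (two_absorbing I <-> strongly_two_absorbing I).
Proof.
move=> HI; have HI' := HI; case: HI' => [I0 ID IM]; split.
- move=> H2 I1 I2 I3 [_ D1 M1] [_ D2 M2] [_ D3 M3] Hsub.
  have H : forall x y z, I1 x -> I2 y -> I3 z -> I (x * y * z).
    by move=> x y z X Y Z; apply: Hsub; apply: mul_mem => //; apply: mul_mem.
  case: (classic (forall x y, I1 x -> I2 y -> I (x * y))) => [h|n12].
    by left; apply: sub_of_prod.
  case: (classic (forall x y, I1 x -> I3 y -> I (x * y))) => [h|n13].
    by right; left; apply: sub_of_prod.
  case: (classic (forall x y, I2 x -> I3 y -> I (x * y))) => [h|n23].
    by right; right; apply: sub_of_prod.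
  exfalso.
  have key : forall x, I1 x -> (forall y, I2 y -> I (x * y)) \/ (forall z, I3 z -> I (x * z)).
    move=> x X.
    case: (L2 HI H2 D2 D3 (a := x) (fun y z Y Z => H _ _ _ X Y Z)) => [h|[h|h]].
    - by left. - by right. - by exfalso; apply: n23.
  have ex2 : forall (P Q : R -> Prop) (F : R -> R -> Prop),
      ~ (forall x y, P x -> Q y -> F x y) -> exists x y, [/\ P x, Q y & ~ F x y].
    move=> P Q F n; apply: NNPP => m; apply: n => x y Px Qy.
    apply: NNPP => nf; apply: m; by exists x, y.
  have [a [b [A B nab]]] := ex2 _ _ _ n12.
  have [c [d [C D nab2]]] := ex2 _ _ _ n13.
  have a3 : forall z, I3 z -> I (a * z).
    by case: (key _ A) => h //; exfalso; apply: nab; apply: h.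
  have c2 : forall y, I2 y -> I (c * y).
    by case: (key _ C) => h //; exfalso; apply: nab2; apply: h.
  case: (key _ (D1 _ _ A C)) => h.
  + apply: nab; apply: (ideal_sub_cancel HI _ (c2 _ B)); rewrite -mulrDl; exact: h.
  + apply: nab2; apply: (ideal_sub_cancel HI _ (a3 _ D)); rewrite addrC -mulrDl; exact: h.
- move=> HS a b c Habc.
  pose P (u : R) := fun x => exists r, x = r * u.
  have Pid : forall u, is_ideal (P u).
    move=> u; split.
    + by exists 0; rewrite mul0r.
    + by move=> x y [r ->] [s ->]; exists (r + s); rewrite mulrDl.
    + by move=> r x [s ->]; exists (r * s); rewrite mulrA.
  have Pu : forall u, P u u by move=> u; exists 1; rewrite mul1r.
  have sub : ideal_sub (ideal_mul (ideal_mul (P a) (P b)) (P c)) I.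
    apply: sub_of_prod => // x y [n [f [g [Fa Gb ->]]]] [t ->].
    have : P (a * b) (\sum_(i < n) f i * g i).
      apply: (big_ind (P (a * b))).
      + by exists 0; rewrite mul0r.
      + by move=> x1 y1 [r ->] [s ->]; exists (r + s); rewrite mulrDl.
      + move=> i _; case: (Fa i) => r ->; case: (Gb i) => s ->.
        exists (r * s); rewrite !mulrA; congr (_ * _).
        by rewrite -!mulrA; congr (_ * _); rewrite mulrC.
    case=> r ->.
    have -> : r * (a * b) * (t * c) = (r * t) * (a * b * c).
      by ring.
    exact: IM.
  case: (HS _ _ _ (Pid a) (Pid b) (Pid c) sub) => [h|[h|h]].
  + by left; apply: h; apply: mul_mem.
  + by right; left; apply: h; apply: mul_mem.
  + by right; right; apply: h; apply: mul_mem.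
Qed.
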